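(* The LP fractional mechanism has approximation ratio $1$ for the fractional scheduling problem without money, for any number $n$ of machines and any number $m$ of tasks.
   Context: Fractional scheduling without payments: $n$ machines, $m$ divisible tasks; machine $i$ has private true times $t_{i,j}\ge0$ and declares $\hat t_{i,j}\ge0$. A mechanism outputs fractions $\alpha_{i,j}(\hat{\mathbf t})\in[0,1]$ with $\sum_i\alpha_{i,j}=1$ for every task $j$. Machines are bound by their declarations: machine $i$ executes her fraction of task $j$ for time $\alpha_{i,j}\max\{\hat t_{i,j},t_{i,j}\}$; her cost is $C_i(\hat{\mathbf t})=\sum_j\alpha_{i,j}\max\{\hat t_{i,j},t_{i,j}\}$, and the (fractional) makespan is $\max_i C_i(\hat{\mathbf t})$. A mechanism is truthful if for every $\mathbf t$, $i$, $\hat{\mathbf t}$: $C_i(\mathbf t_i,\hat{\mathbf t}_{-i})\le C_i(\hat{\mathbf t})$. The approximation ratio of a truthful mechanism is the supremum over instances $\mathbf t$ of the makespan under truthful reports $\hat{\mathbf t}=\mathbf t$ divided by the optimal fractional makespan $\min_\alpha\max_i\sum_j\alpha_{i,j}t_{i,j}$. The LP fractional mechanism, on declarations $\hat{\mathbf t}$, outputs as fractions an optimal solution $\alpha(\hat{\mathbf t})$ (selected by a fixed rule among optimal solutions) of the linear program: minimize $\mu$ subject to $\sum_i\alpha_{i,j}=1$ for all $j$, $\mu-\sum_j\alpha_{i,j}\hat t_{i,j}\ge0$ for all $i$, $\alpha_{i,j}\ge0$. *)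

(* Defs.v *)
From mathcomp Require Import all_boot all_order all_algebra.
Set Implicit Arguments. Unset Strict Implicit. Unset Printing Implicit Defensive.
Import Order.TTheory GRing.Theory Num.Theory.
Local Open Scope ring_scope.

Section Sched.
Variables (R : realFieldType) (n m : nat).

(* A time matrix / declaration: t i j = time of machine i on task j. *)
Definition times := 'I_n -> 'I_m -> R.
(* A fractional assignment: a i j = fraction of task j given to machine i. *)
Definition fractions := 'I_n -> 'I_m -> R.

Definition nonneg_times (t : times) : Prop := forall i j, 0 <= t i j.

Definition feasible_frac (a : fractions) : Prop :=
  (forall i j, 0 <= a i j <= 1) /\ (forall j, \sum_(i < n) a i j = 1).

Definition load (a : fractions) (t : times) (i : 'I_n) : R :=
  \sum_(j < m) a i j * t i j.
Definition makespan (a : fractions) (t : times) : R :=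
  \big[Num.max/0]_(i < n) load a t i.

Definition lp_feasible (th : times) (a : fractions) (mu : R) : Prop :=
  (forall j, \sum_(i < n) a i j = 1) /\
  (forall i, 0 <= mu - \sum_(j < m) a i j * th i j) /\
  (forall i j, 0 <= a i j).
Definition lp_optimal (th : times) (a : fractions) (mu : R) : Prop :=
  lp_feasible th a mu /\ forall b nu, lp_feasible th b nu -> mu <= nu.

Definition mechanism := times -> fractions.

(* M is an LP fractional mechanism: on every (nonnegative) declaration it
   outputs the alpha-part of an optimal solution of the LP; M itself is
   the fixed selection rule among optimal solutions. *)
Definition LP_mechanism (M : mechanism) : Prop :=
  forall th, nonneg_times th -> exists mu, lp_optimal th (M th) mu.

Definition cost (M : mechanism) (t th : times) (i : 'I_n) : R :=
  \sum_(j < m) M th i j * Num.max (th i j) (t i j).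

Definition report_true (t th : times) (i : 'I_n) : times :=
  fun k => if k == i then t i else th k.

Definition truthful (M : mechanism) : Prop :=
  forall (t th : times) (i : 'I_n), nonneg_times t -> nonneg_times th ->
    cost M t (report_true t th i) i <= cost M t th i.

Definition approx_ratio_one (M : mechanism) : Prop :=
  forall t : times, nonneg_times t ->
    forall b : fractions, feasible_frac b -> makespan (M t) t <= makespan b t.

End Sched.

(* Main.v *)
Require Import Defs.
From mathcomp Require Import all_boot all_order all_algebra.
From mathcomp Require Import ring lra.
Set Implicit Arguments. Unset Strict Implicit. Unset Printing Implicit Defensive.
Import Order.TTheory GRing.Theory Num.Theory.

Section Aux.
Local Open Scope ring_scope.
Variables (R : realFieldType) (n m : nat).

Lemma sum_ge0_aux (F : 'I_m -> R) : (forall j, 0 <= F j) -> 0 <= \sum_(j < m) F j.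
Proof. by move=> H; apply: sumr_ge0 => j _; apply: H. Qed.

Lemma equalize (th : times R n m) (a : fractions R n m) (mu : R) (p : 'I_n) :
  nonneg_times th -> lp_optimal th a mu ->
  mu <= \sum_(j < m) a p j * th p j.
Proof.
move=> hth [[hs [hl ha]] hopt].
set L := \sum_(j < m) a p j * th p j.
have L0 : 0 <= L by apply: sum_ge0_aux => j; apply: mulr_ge0.
rewrite leNgt; apply/negP => hLmu.
set T := \sum_(j < m) th p j.
have T0 : 0 <= T by apply: sum_ge0_aux.
set d := mu - L.
have d0 : 0 < d by rewrite subr_gt0.
have mu0 : 0 < mu by apply: le_lt_trans hLmu.
have den0 : 0 < d + T + mu by lra.
set e := d / (d + T + mu).
have e0 : 0 < e by apply: divr_gt0.
have e1 : e < 1 by rewrite ltr_pdivrMr //; lra.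
have eT : e * T < d.
  rewrite /e mulrAC ltr_pdivrMr // .
  have: d * T < d * (d + T + mu) by rewrite ltr_pM2l //; lra.
  by rewrite mulrC.
pose b : fractions R n m := fun k j =>
  if k == p then a p j + e * (1 - a p j) else (1 - e) * a k j.
pose nu := Num.max ((1 - e) * mu) (L + e * T).
have hb : lp_feasible th b nu.
  split; [|split].
  - move=> j; rewrite (bigD1 p) //= /b eqxx.
    have -> : \sum_(i < n | i != p) (if i == p then a p j + e * (1 - a p j)
                     else (1 - e) * a i j) = (1 - e) * (1 - a p j).
      rewrite (eq_bigr (fun i => (1 - e) * a i j)); last first.
        by move=> i /negPf ->.
      rewrite -mulr_sumr; congr (_ * _).
      by move: (hs j); rewrite (bigD1 p) //= => <-; ring.
    ring.
  - move=> k; rewrite subr_ge0 /nu /b.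
    case: (eqVneq k p) => [->|hk].
    + rewrite le_max; apply/orP; right.
      rewrite (eq_bigr (fun j => a p j * th p j + e * ((1 - a p j) * th p j)));
        last by move=> j _; ring.
      rewrite big_split /= -mulr_sumr lerD2l ler_wpM2l //; first lra.
      apply: ler_sum => j _.
      have := mulr_ge0 (ha p j) (hth p j); lra.
    + rewrite le_max; apply/orP; left.
      rewrite (eq_bigr (fun j => (1 - e) * (a k j * th k j))); last first.
        by move=> j _; ring.
      rewrite -mulr_sumr ler_wpM2l //; first lra.
      by have := hl k; rewrite subr_ge0.
  - move=> k j; rewrite /b; case: (k == p).
    + have := ha p j; have : 0 <= 1 - a p j.
        have := hs j; rewrite (bigD1 p) //= => h.
        have : 0 <= \sum_(i < n | i != p) a i j by apply: sumr_ge0.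
        lra.
      move=> h1 h2; have := mulr_ge0 (ltW e0) h1; lra.
    + apply: mulr_ge0 => //; lra.
have := hopt b nu hb.
have h3 : (1 - e) * mu < mu by rewrite -[X in _ < X]mul1r ltr_pM2r //; lra.
have hd : d = mu - L by [].
rewrite /nu le_max => /orP [h|h]; lra.
Qed.

End Aux.

Section Main.
Local Open Scope ring_scope.

Lemma bigmax_ub (R : realFieldType) (n : nat) (F : 'I_n -> R) (i : 'I_n) :
  F i <= \big[Num.max/0]_(k < n) F k.
Proof. by rewrite (bigD1 i) //= le_max lexx. Qed.

Lemma bigmax_ge0 (R : realFieldType) (n : nat) (F : 'I_n -> R) :
  0 <= \big[Num.max/0]_(k < n) F k.
Proof.
apply: (big_rec (fun y => 0 <= y)) => // k y _ hy.
by rewrite le_max hy orbT.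
Qed.

Lemma bigmax_lub (R : realFieldType) (n : nat) (F : 'I_n -> R) x :
  0 <= x -> (forall k, F k <= x) -> \big[Num.max/0]_(k < n) F k <= x.
Proof.
move=> h0 h; apply: (big_ind (fun y => y <= x)) => // y z hy hz.
by rewrite ge_max hy hz.
Qed.

Theorem theorem5 (R : realFieldType) (n m : nat) (M : mechanism R n m) :
  LP_mechanism M -> truthful M /\ approx_ratio_one M.
Proof.
move=> hM; split.
- move=> t th i ht hth.
  set t' := report_true t th i.
  have ht' : nonneg_times t'.
    by move=> k j; rewrite /t' /report_true; case: (k == i).
  have [mu' hopt'] := hM t' ht'.
  have [mu hopt] := hM th hth.
  have hmu := equalize i hth hopt.
  case: hopt => [[hs [hl ha]] _].
  case: (hopt') => [[_ [hl' _]] hopt2].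
  have hti : t' i = t i by rewrite /t' /report_true eqxx.
  set c := cost M t th i.
  have hLc : \sum_(j < m) M th i j * th i j <= c.
    by apply: ler_sum => j _; rewrite ler_wpM2l // le_max lexx.
  have hmuc : mu <= c by apply: le_trans hLc.
  have hfeas : lp_feasible t' (M th) c.
    split; [by []|split; last by []].
    move=> k; rewrite subr_ge0.
    case: (eqVneq k i) => [->|hk].
    + rewrite hti; apply: ler_sum => j _; rewrite ler_wpM2l // le_max lexx orbT //.
    + have -> : t' k = th k by rewrite /t' /report_true (negPf hk).
      apply: le_trans hmuc; by have := hl k; rewrite subr_ge0.
  have := hopt2 _ _ hfeas => hmu'c.
  apply: le_trans hmu'c.
  rewrite /cost hti.
  have -> : \sum_(j < m) M t' i j * Num.max (t i j) (t i j)
           = \sum_(j < m) M t' i j * t' i j.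
    by apply: eq_bigr => j _; rewrite maxxx hti.
  by have := hl' i; rewrite subr_ge0.
- move=> t ht b [hb01 hbs].
  have [mu [[hs [hl ha]] hopt]] := hM t ht.
  have hmub : mu <= makespan b t.
    apply: hopt; split; [by []|split].
    + by move=> k; rewrite subr_ge0; apply: (bigmax_ub (fun k => load b t k)).
    + by move=> k j; case/andP: (hb01 k j).
  apply: bigmax_lub; first exact: bigmax_ge0.
  move=> k; apply: le_trans hmub.
  by have := hl k; rewrite subr_ge0.
Qed.

End Main.
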